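(* Let $\mathcal V$ be a variety with a difference term $d$ and let $A\in\mathcal V$, $n\ge1$. Then $A$ is $n$-step nilpotent if and only if \[A\cong Q_n\otimes^{T_{n-1}}\big(Q_{n-1}\otimes^{T_{n-2}}\cdots(Q_2\otimes^{T_1}Q_1)\cdots\big)\] for some abelian algebras $Q_1,\dots,Q_n\in\mathcal V$, where for each $k\ge2$ the product $Q_k\otimes^{T_{k-1}}(\cdots)$ is formed using the binary operation $x+y:=d^{Q_k}(x,0_k,y)$ on $Q_k$ for some element $0_k\in Q_k$, and arbitrary transfer maps $T_{k-1}$.
   Context: All algebras are in the sense of universal algebra, in a fixed signature $\tau$. For congruences $\alpha,\beta$, $[\alpha,\beta]$ is the term-condition (TC) commutator; $1$ is the total relation and $0$ equality. An algebra is abelian if $[1,1]=0$. Define $[\alpha]_1=[\alpha,\alpha]$ and $[\alpha]_{k+1}=[\alpha,[\alpha]_k]$; $A$ is $n$-step nilpotent if $[1_A]_n=0$. A difference term for $\mathcal V$ is a ternary term $d$ such that for every $A\in\mathcal V$, $\theta\in\operatorname{Con}A$, $(a,b)\in\theta$: $d(a,a,b)=b$ and $(d(a,b,b),a)\in[\theta,\theta]$. Given algebras $B,Q$ in signature $\tau$, a binary operation $+$ on $B$, and maps $T_f:Q^{\operatorname{ar}f}\to B$ ($f\in\tau$), the algebra $B\otimes^{T}Q$ has universe $B\times Q$ and operations $F_f((b_1,q_1),\dots,(b_n,q_n))=\big(f^B(b_1,\dots,b_n)+T_f(q_1,\dots,q_n),\,f^Q(q_1,\dots,q_n)\big)$.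 *)

(* Defs.v *)
From mathcomp Require Import all_boot.
Set Implicit Arguments. Unset Strict Implicit. Unset Printing Implicit Defensive.

Record signature := Signature { sym : Type; arity : sym -> nat }.

Record algebra (tau : signature) := Algebra {
  carrier :> Type;
  op : forall f : sym tau, ('I_(arity f) -> carrier) -> carrier }.
Arguments op {tau} a f _ : rename.

Inductive term (tau : signature) (V : Type) : Type :=
| tvar : V -> term tau V
| tapp : forall f : sym tau, ('I_(arity f) -> term tau V) -> term tau V.

Fixpoint eval {tau : signature} {V : Type} (A : algebra tau) (env : V -> A)
    (t : term tau V) : A :=
  match t with
  | tvar v => env v
  | tapp f ts => op A f (fun i => @eval tau V A env (ts i))
  end.
Arguments eval {tau V} A env t.

Section UA.
Variable tau : signature.

Definition in_variety (Sigma : term tau nat -> term tau nat -> Prop)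
    (A : algebra tau) : Prop :=
  forall s t, Sigma s t -> forall env : nat -> A, eval A env s = eval A env t.

Definition is_congruence (A : algebra tau) (r : A -> A -> Prop) : Prop :=
  [/\ (forall x, r x x), (forall x y, r x y -> r y x),
      (forall x y z, r x y -> r y z -> r x z) &
      (forall f (x y : 'I_(arity f) -> A),
          (forall i, r (x i) (y i)) -> r (op A f x) (op A f y))].

Definition total_rel (A : Type) : A -> A -> Prop := fun _ _ => True.

Definition sum_env (A : Type) n m (a : 'I_n -> A) (b : 'I_m -> A)
    (v : 'I_n + 'I_m) : A :=
  match v with inl i => a i | inr j => b j end.

Definition centralizes (A : algebra tau) (alpha beta delta : A -> A -> Prop) : Prop :=
  forall n m (t : term tau ('I_n + 'I_m)) (a a' : 'I_n -> A) (b b' : 'I_m -> A),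
    (forall i, alpha (a i) (a' i)) -> (forall j, beta (b j) (b' j)) ->
    delta (eval A (sum_env a b) t) (eval A (sum_env a b') t) ->
    delta (eval A (sum_env a' b) t) (eval A (sum_env a' b') t).

Definition tc_comm (A : algebra tau) (alpha beta : A -> A -> Prop) : A -> A -> Prop :=
  fun x y => forall delta, is_congruence delta -> centralizes alpha beta delta -> delta x y.

(* iter_comm alpha k = [alpha]_k for k >= 1 ([alpha]_1 = [alpha,alpha],
   [alpha]_{k+1} = [alpha,[alpha]_k]); iter_comm alpha 0 = alpha. *)
Fixpoint iter_comm (A : algebra tau) (alpha : A -> A -> Prop) (k : nat) : A -> A -> Prop :=
  match k with
  | 0 => alpha
  | k'.+1 => tc_comm alpha (iter_comm alpha k')
  end.
Arguments eval {tau V} A env t.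

Definition nilpotent (A : algebra tau) (n : nat) : Prop :=
  forall x y : A, iter_comm (@total_rel A) n x y <-> x = y.

Definition abelian (A : algebra tau) : Prop :=
  forall x y : A, tc_comm (@total_rel A) (@total_rel A) x y <-> x = y.

Definition env3 (A : Type) (x y z : A) : 'I_3 -> A :=
  fun i => match val i with 0 => x | 1 => y | _ => z end.

Definition term3 (A : algebra tau) (d : term tau 'I_3) (x y z : A) : A :=
  eval A (env3 x y z) d.

Definition difference_term (Sigma : term tau nat -> term tau nat -> Prop)
    (d : term tau 'I_3) : Prop :=
  forall A : algebra tau, in_variety Sigma A ->
  forall theta : A -> A -> Prop, is_congruence theta ->
  forall a b : A, theta a b ->
    term3 d a a b = b /\ tc_comm theta theta (term3 d a b b) a.

Definition otimes (B Q : algebra tau) (plus : B -> B -> B)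
    (T : forall f : sym tau, ('I_(arity f) -> Q) -> B) : algebra tau :=
  @Algebra tau (B * Q)%type
    (fun f x => (plus (op B f (fun i => (x i).1)) (T f (fun i => (x i).2)),
                 op Q f (fun i => (x i).2))).

Definition is_hom (A B : algebra tau) (h : A -> B) : Prop :=
  forall f (x : 'I_(arity f) -> A), h (op A f x) = op B f (fun i => h (x i)).

Definition isomorphic (A B : algebra tau) : Prop :=
  exists (h : A -> B) (g : B -> A),
    [/\ is_hom h, cancel h g & cancel g h].

Inductive iterated (Sigma : term tau nat -> term tau nat -> Prop)
    (d : term tau 'I_3) : nat -> algebra tau -> Prop :=
| iterated_one (Q : algebra tau) :
    in_variety Sigma Q -> abelian Q -> iterated Sigma d 1 Q
| iterated_succ k (C Q : algebra tau) (zero : Q)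
    (T : forall f : sym tau, ('I_(arity f) -> C) -> Q) :
    iterated Sigma d k C -> in_variety Sigma Q -> abelian Q ->
    iterated Sigma d k.+1 (otimes (fun x y => term3 d x zero y) T).

End UA.

(* Main.v *)
Require Import Defs.
From mathcomp Require Import all_boot.
From Stdlib Require Import FunctionalExtensionality ProofIrrelevance ClassicalEpsilon Classical PropExtensionality.

Set Implicit Arguments. Unset Strict Implicit. Unset Printing Implicit Defensive.

Section Basics.
Variable tau : signature.

Fixpoint tsubst (V W : Type) (s : V -> term tau W) (t : term tau V) : term tau W :=
  match t with
  | tvar v => s v
  | tapp f ts => tapp (fun i => tsubst s (ts i))
  end.

Lemma eval_tsubst (A : algebra tau) V W (s : V -> term tau W) (env : W -> A) t :
  eval A env (tsubst s t) = eval A (fun v => eval A env (s v)) t.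
Proof.
elim: t => [v|f ts IH] //=; congr (op A f); apply: functional_extensionality => i; exact: IH.
Qed.

Definition rename V W (g : V -> W) (t : term tau V) : term tau W :=
  tsubst (fun v => tvar tau (g v)) t.

Lemma eval_rename (A : algebra tau) V W (g : V -> W) (env : W -> A) t :
  eval A env (rename g t) = eval A (fun v => env (g v)) t.
Proof. by rewrite /rename eval_tsubst. Qed.

Lemma hom_eval (A B : algebra tau) (h : A -> B) V (env : V -> A) t :
  is_hom h -> h (eval A env t) = eval B (fun v => h (env v)) t.
Proof.
move=> hh; elim: t => [v|f ts IH] //=; rewrite hh; congr (op B f);
apply: functional_extensionality => i; exact: IH.
Qed.

Lemma cong_eval (A : algebra tau) (r : A -> A -> Prop) V (e e' : V -> A) t :
  is_congruence r -> (forall v, r (e v) (e' v)) -> r (eval A e t) (eval A e' t).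
Proof.
case=> _ _ _ hop he; elim: t => [v|f ts IH] //=; exact: hop.
Qed.

Definition senv (A : Type) (X Y : Type) (a : X -> A) (b : Y -> A) (v : X + Y) : A :=
  match v with inl x => a x | inr y => b y end.

Lemma centralizes_fin (A : algebra tau) (al be de : A -> A -> Prop) :
  centralizes al be de ->
  forall (X Y : finType) (t : term tau (X + Y)) (a a' : X -> A) (b b' : Y -> A),
    (forall x, al (a x) (a' x)) -> (forall y, be (b y) (b' y)) ->
    de (eval A (senv a b) t) (eval A (senv a b') t) ->
    de (eval A (senv a' b) t) (eval A (senv a' b') t).
Proof.
move=> hC X Y t a a' b b' ha hb.
pose g (v : X + Y) : 'I_#|X| + 'I_#|Y| :=
  match v with inl x => inl (enum_rank x) | inr y => inr (enum_rank y) end.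
have E : forall (a : X -> A) (b : Y -> A),
    eval A (senv a b) t = eval A (sum_env (fun i => a (enum_val i)) (fun j => b (enum_val j))) (rename g t).
  move=> a1 b1; rewrite eval_rename; congr (eval A _ t).
  by apply: functional_extensionality => -[x|y] /=; rewrite enum_rankK.
rewrite !E; apply: (hC _ _ _ (fun i => a (enum_val i))).
- by move=> i; exact: ha.
- by move=> j; exact: hb.
Qed.

Lemma total_cong (A : algebra tau) : is_congruence (@total_rel A).
Proof. by split. Qed.

Lemma eq_cong (A : algebra tau) : is_congruence (@eq A).
Proof.
split=> //; [by move=> x y z -> | move=> f x y h; congr (op A f);
  exact: functional_extensionality].
Qed.

Lemma tc_cong (A : algebra tau) (al be : A -> A -> Prop) : is_congruence (tc_comm al be).
Proof.
split.
- by move=> x de [hr _ _ _] _.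
- by move=> x y h de hde hc; case: (hde) => _ hs _ _; apply: hs; apply: h.
- by move=> x y z h1 h2 de hde hc; case: (hde) => _ _ ht _; apply: ht (h1 _ hde hc) (h2 _ hde hc).
- by move=> f x y h de hde hc; case: (hde) => _ _ _ ho; apply: ho => i; apply: h.
Qed.

Lemma tc_centr (A : algebra tau) (al be : A -> A -> Prop) : centralizes al be (tc_comm al be).
Proof.
move=> n m t a a' b b' ha hb h de hde hc; apply: (hc _ _ _ a) => //; exact: h.
Qed.

Lemma centr_eq (A : algebra tau) (al be de : A -> A -> Prop) :
  (forall x y, de x y <-> x = y) -> centralizes al be de -> centralizes al be eq.
Proof.
move=> hde hc n m t a a' b b' ha hb h; apply/hde; apply: (hc _ _ _ a) => //; exact/hde.
Qed.

Lemma centr_mono (A : algebra tau) (al be al' be' de : A -> A -> Prop) :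
  (forall x y, al' x y -> al x y) -> (forall x y, be' x y -> be x y) ->
  centralizes al be de -> centralizes al' be' de.
Proof.
move=> h1 h2 hc n m t a a' b b' ha hb; apply: hc => [i|j]; [exact: h1|exact: h2].
Qed.

Lemma tc_le_eq (A : algebra tau) (al be : A -> A -> Prop) :
  centralizes al be eq -> forall x y, tc_comm al be x y -> x = y.
Proof. move=> hc x y h; exact: h (eq_cong A) hc. Qed.

Lemma iter_cong (A : algebra tau) k : is_congruence (iter_comm (@total_rel A) k).
Proof. case: k => [|k]; [exact: total_cong | exact: tc_cong]. Qed.

End Basics.

Section Affine.
Variable tau : signature.
Variable d : term tau 'I_3.

Definition D3 V (t1 t2 t3 : term tau V) : term tau V :=
  tsubst (fun i : 'I_3 => match val i with 0 => t1 | 1 => t2 | _ => t3 end) d.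

Lemma eval_D3 (A : algebra tau) V (env : V -> A) t1 t2 t3 :
  eval A env (D3 t1 t2 t3) = term3 d (eval A env t1) (eval A env t2) (eval A env t3).
Proof.
rewrite /D3 eval_tsubst /term3; congr (eval A _ d).
by apply: functional_extensionality => -[[|[|k]] hk].
Qed.

Variable A : algebra tau.
Variable al : A -> A -> Prop.
Hypothesis hal : is_congruence al.
Hypothesis hC : centralizes (@total_rel A) al eq.
Local Notation D := (term3 d).
Hypothesis hD1 : forall x y : A, D x x y = y.
Hypothesis hD2 : forall x y : A, al x y -> D y x x = y.

Lemma al_sym x y : al x y -> al y x.
Proof. by case: hal => _ hs _ _; apply: hs. Qed.
Lemma al_trans x y z : al x y -> al y z -> al x z.
Proof. by case: hal => _ _ ht _; apply: ht. Qed.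
Lemma al_refl x : al x x.
Proof. by case: hal. Qed.

Lemma al_D x y z x' y' z' : al x x' -> al y y' -> al z z' -> al (D x y z) (D x' y' z').
Proof.
move=> h1 h2 h3; rewrite /term3; apply: cong_eval => // -[[|[|k]] hk] //.
Qed.

Lemma tc_trick (X Y : finType) (L P : term tau (X + Y)) (a0 a1 : X -> A) (b0 b1 : Y -> A) :
  (forall y, al (b0 y) (b1 y)) ->
  eval A (senv a0 b0) L = eval A (senv a0 b0) P ->
  eval A (senv a0 b1) L = eval A (senv a0 b1) P ->
  eval A (senv a1 b0) L = eval A (senv a1 b0) P ->
  al (eval A (senv a1 b1) L) (eval A (senv a1 b1) P) ->
  eval A (senv a1 b1) L = eval A (senv a1 b1) P.
Proof.
move=> hb h00 h01 h10 h11.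
pose incl (v : X + Y) : option X + Y := match v with inl x => inl (Some x) | inr y => inr y end.
pose q := eval A (senv a1 b1) P.
pose t := D3 (rename incl L) (rename incl P) (tvar tau (inl None)).
pose ext (a : X -> A) (o : option X) := match o with None => q | Some x => a x end.
have E : forall a b, eval A (senv (ext a) b) t =
    D (eval A (senv a b) L) (eval A (senv a b) P) q.
  move=> a b; rewrite /t eval_D3 !eval_rename /=; congr (D _ _ _);
  by congr (eval A _ _); apply: functional_extensionality => -[x|y].
have := @centralizes_fin tau A _ _ _ hC _ _ t (ext a0) (ext a1) b0 b1 (fun _ => I) hb.
rewrite !E h00 h01 h10 !hD1 => /(_ erefl) H.
have H2 := hD2 (al_sym h11); rewrite -/q in H2 *.
by rewrite -{1}H2.
Qed.


Definition va n m i (h : i < n) : term tau ('I_n + 'I_m) := tvar tau (inl (Ordinal h)).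
Definition vb n m i (h : i < m) : term tau ('I_n + 'I_m) := tvar tau (inr (Ordinal h)).
Definition envl n (s : seq A) (x0 : A) (i : 'I_n) : A := nth x0 s i.

Lemma I4 x y z w : al x y -> D (D y x z) z w = D y x w.
Proof.
move=> hxy.
pose L := D3 (D3 (@vb 3 1 0 isT) (@va 3 1 0 isT) (@va 3 1 1 isT)) (@va 3 1 1 isT) (@va 3 1 2 isT).
pose P := D3 (@vb 3 1 0 isT) (@va 3 1 0 isT) (@va 3 1 2 isT).
have := @tc_trick _ _ L P (envl [:: x; x; x] x) (envl [:: x; z; w] x)
  (envl [:: x] x) (envl [:: y] x).
rewrite /L /P !eval_D3 /= /envl /=; apply.
- by move=> [[|k] hk] //=.
- by rewrite !hD1.
- by rewrite !hD2.
- by rewrite !hD1.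
- apply: (@al_trans _ w).
  + apply: (@al_trans _ (D (D x x z) z w)); last by rewrite !hD1; apply: al_refl.
    by do ! first [assumption | apply: al_sym; assumption | apply: al_refl | apply: al_D].
  + apply: (@al_trans _ (D x x w)); first by rewrite hD1; apply: al_refl.
    by do ! first [assumption | apply: al_sym; assumption | apply: al_refl | apply: al_D].
Qed.


Lemma al_op f (x y : 'I_(arity f) -> A) : (forall i, al (x i) (y i)) -> al (op A f x) (op A f y).
Proof. by case: hal => _ _ _; apply. Qed.

Ltac alc := by do ! first [solve [auto] | apply: al_sym; solve [auto] | apply: al_refl
   | apply: al_D | apply: al_op => ? ].

Lemma I8 y g m o : al y m -> al g m -> D y g (D g m o) = D y m o.
Proof.
move=> hym hgm.
pose L := D3 (@vb 2 2 0 isT) (@vb 2 2 1 isT) (D3 (@vb 2 2 1 isT) (@va 2 2 0 isT) (@va 2 2 1 isT)).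
pose P := D3 (@vb 2 2 0 isT) (@va 2 2 0 isT) (@va 2 2 1 isT).
have := @tc_trick _ _ L P (envl [:: m; m] m) (envl [:: m; o] m)
  (envl [:: m; m] m) (envl [:: y; g] m).
rewrite /L /P !eval_D3 /= /envl /=; apply.
- by move=> [[|[|k]] hk] //=; apply: al_sym.
- by rewrite !hD1.
- have hmg : al m g by apply: al_sym.
  have hgy : al g y by apply: (al_trans hgm); apply: al_sym.
  by rewrite (hD2 hmg) (hD2 hgy) (hD2 (al_sym hym)).
- by rewrite !hD1.
- apply: (@al_trans _ o).
  + apply: (@al_trans _ (D m m (D m m o))); last by rewrite !hD1; apply: al_refl.
    alc.
  + apply: (@al_trans _ (D m m o)); first by rewrite hD1; apply: al_refl.
    alc.
Qed.

Lemma I5 x y z w s : al x y -> D (D y x z) w s = D y x (D z w s).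
Proof.
move=> hxy.
pose L := D3 (D3 (@vb 4 1 0 isT) (@va 4 1 0 isT) (@va 4 1 1 isT)) (@va 4 1 2 isT) (@va 4 1 3 isT).
pose P := D3 (@vb 4 1 0 isT) (@va 4 1 0 isT) (D3 (@va 4 1 1 isT) (@va 4 1 2 isT) (@va 4 1 3 isT)).
have := @tc_trick _ _ L P (envl [:: x; x; x; x] x) (envl [:: x; z; w; s] x)
  (envl [:: x] x) (envl [:: y] x).
rewrite /L /P !eval_D3 /= /envl /=; apply.
- by move=> [[|k] hk] //=.
- by rewrite !hD1.
- by rewrite !hD1 !hD2.
- by rewrite !hD1.
- apply: (@al_trans _ (D z w s)).
  + apply: (@al_trans _ (D (D x x z) w s)); last by rewrite !hD1; apply: al_refl.
    alc.
  + apply: (@al_trans _ (D x x (D z w s))); first by rewrite hD1; apply: al_refl.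
    alc.
Qed.

Lemma I3 f (x y z : 'I_(arity f) -> A) : (forall i, al (x i) (y i)) ->
  op A f (fun i => D (y i) (x i) (z i)) = D (op A f y) (op A f x) (op A f z).
Proof.
move=> hxy.
pose L : term tau (('I_(arity f) + 'I_(arity f)) + 'I_(arity f)) :=
  tapp (fun i => D3 (tvar tau (inr i)) (tvar tau (inl (inl i))) (tvar tau (inl (inr i)))).
pose P : term tau (('I_(arity f) + 'I_(arity f)) + 'I_(arity f)) :=
  D3 (tapp (fun i => tvar tau (inr i))) (tapp (fun i => tvar tau (inl (inl i))))
     (tapp (fun i => tvar tau (inl (inr i)))).
have EL : forall a b, eval A (senv a b) L = op A f (fun i => D (b i) (a (inl i)) (a (inr i))).
  move=> a b /=; congr (op A f); apply: functional_extensionality => i; by rewrite eval_D3.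
have EP : forall a b, eval A (senv a b) P =
    D (op A f b) (op A f (fun i => a (inl i))) (op A f (fun i => a (inr i))).
  by move=> a b; rewrite eval_D3.
have := @tc_trick _ _ L P (senv x x) (senv x z) x y hxy.
rewrite !EL !EP /=; apply.
- have -> : (fun i => D (x i) (x i) (x i)) = x.
    by apply: functional_extensionality => i; rewrite hD1.
  by rewrite hD1.
- have -> : (fun i => D (y i) (x i) (x i)) = y.
    by apply: functional_extensionality => i; rewrite hD2.
  by rewrite hD2 //; apply: al_op.
- have -> : (fun i => D (x i) (x i) (z i)) = z.
    by apply: functional_extensionality => i; rewrite hD1.
  by rewrite hD1.
- apply: (@al_trans _ (op A f z)).
  + have {2}-> : z = (fun i => D (x i) (x i) (z i)).
      by apply: functional_extensionality => i; rewrite hD1.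
    apply: al_op => i; alc.
  + apply: (@al_trans _ (D (op A f x) (op A f x) (op A f z))).
    by rewrite hD1; apply: al_refl.
    eapply al_D; [apply: al_op => i; alc | exact: (al_refl (op A f x)) | exact: (al_refl (op A f z))].
Qed.

End Affine.

Section Transfer.
Variable tau : signature.

Lemma centr_transfer (A B : algebra tau) (h : A -> B) (g : B -> A)
    (al be : A -> A -> Prop) (alB beB : B -> B -> Prop) :
  is_hom h -> cancel h g -> centralizes alB beB eq ->
  (forall x y, al x y -> alB (h x) (h y)) -> (forall x y, be x y -> beB (h x) (h y)) ->
  centralizes al be eq.
Proof.
move=> hh hK hc h1 h2 n m t a a' b b' ha hb E.
have F : forall a b, h (eval A (sum_env a b) t) = eval B (sum_env (fun i => h (a i)) (fun j => h (b j))) t.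
  move=> a1 b1; rewrite hom_eval //; congr (eval B _ t).
  by apply: functional_extensionality => -[i|j].
rewrite -[LHS]hK -[RHS]hK; congr g; rewrite !F.
apply: hc => [i|j|]; [exact: h1|exact: h2|by rewrite -!F E].
Qed.

Lemma hom_iter (A B : algebra tau) (h : A -> B) k x y :
  is_hom h -> iter_comm (@total_rel A) k x y -> iter_comm (@total_rel B) k (h x) (h y).
Proof.
move=> hh; elim: k x y => [//|k IH] x y H de hde hc.
pose de' (u v : A) := de (h u) (h v).
have cde : is_congruence de'.
  case: hde => h1 h2 h3 h4; split; rewrite /de' => //.
  - by move=> ? ? ?; apply: h2.
  - by move=> ? ? ? ? ?; apply: h3; eauto.
  - by move=> f u v huv; rewrite !hh; apply: h4.
apply: (H de' cde) => n m t a a' b b' _ hb.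
rewrite /de' !hom_eval //.
have F : forall (a : 'I_n -> A) (b : 'I_m -> A), (fun v => h (sum_env a b v)) = sum_env (fun i => h (a i)) (fun j => h (b j)).
  by move=> a1 b1; apply: functional_extensionality => -[i|j].
rewrite !F; apply: hc => [i|j]; [done|apply: IH; exact: hb].
Qed.

Lemma image_variety (Sigma : term tau nat -> term tau nat -> Prop) (A B : algebra tau) (h : A -> B) :
  is_hom h -> (forall b, exists a, h a = b) -> in_variety Sigma A -> in_variety Sigma B.
Proof.
move=> hh hs hA s t hst env.
pose lift (k : nat) : A := proj1_sig (constructive_indefinite_description _ (hs (env k))).
have E : env = (fun k => h (lift k)).
  apply: functional_extensionality => k; rewrite /lift.
  by case: (constructive_indefinite_description _ _).
by rewrite E -!hom_eval // (hA s t hst).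
Qed.

End Transfer.

Section Main.
Variable tau : signature.
Variable Sigma : term tau nat -> term tau nat -> Prop.
Variable d : term tau 'I_3.
Hypothesis hd : difference_term Sigma d.
Local Notation D := (term3 d).

Lemma hD1_gen (A : algebra tau) : in_variety Sigma A -> forall x y : A, D x x y = y.
Proof. by move=> hA x y; case: (hd hA (total_cong A) (a:=x) (b:=y) I). Qed.

Lemma abel_centr (A : algebra tau) : abelian A -> centralizes (@total_rel A) (@total_rel A) eq.
Proof. move=> hab; apply: (centr_eq hab); exact: tc_centr. Qed.

Lemma abel_hD2 (A : algebra tau) : in_variety Sigma A -> abelian A ->
  forall x y : A, total_rel x y -> D y x x = y.
Proof.
move=> hA hab x y _; case: (hd hA (total_cong A) (a:=y) (b:=x) I) => _ H.
exact/hab.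
Qed.

Section Prod.
Variables (Q C : algebra tau) (zero : Q) (T : forall f : sym tau, ('I_(arity f) -> C) -> Q).
Hypothesis hQ : in_variety Sigma Q.
Hypothesis habQ : abelian Q.
Let P := otimes (fun x y => term3 d x zero y) T.

Lemma snd_eval V (env : V -> P) t : (eval P env t).2 = eval C (fun v => (env v).2) t.
Proof.
elim: t => [//|f ts IH] /=; congr (op C f); apply: functional_extensionality => i; exact: IH.
Qed.

Definition U V (t : term tau V) (q : V -> C) : Q := (eval P (fun v => (zero, q v)) t).1.

Let h1 := hD1_gen hQ.
Let h2 := abel_hD2 hQ habQ.
Let hc := abel_centr habQ.
Let hcong := total_cong Q.

Lemma fst_eval V (env : V -> P) t : (eval P env t).1 =
  D (eval Q (fun v => (env v).1) t) (eval Q (fun _ => zero) t) (U t (fun v => (env v).2)).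
Proof.
elim: t => [v|f ts IH] /=; first by rewrite /U /= h2.
rewrite /U /=.
have -> : (fun i => (eval P env (ts i)).1) = (fun i =>
   D (eval Q (fun v => (env v).1) (ts i)) (eval Q (fun _ => zero) (ts i)) (U (ts i) (fun v => (env v).2))).
  by apply: functional_extensionality => i; exact: IH.
have -> : (fun i => (eval P (fun v => (zero, (env v).2)) (ts i)).1) = (fun i => U (ts i) (fun v => (env v).2)).
  by [].
have -> : (fun i => (eval P (fun v => (zero, (env v).2)) (ts i)).2) = (fun i => (eval P env (ts i)).2).
  by apply: functional_extensionality => i; rewrite !snd_eval.
rewrite (I3 hcong hc h1 h2) //.
by rewrite (I5 hcong hc h1 h2).
Qed.

Lemma prod_centr : centralizes (@total_rel P) (fun x y : P => x.2 = y.2) eq.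
Proof.
move=> n m t a a' b b' _ hb E.
have Eb : (fun j => (b j).2) = (fun j => (b' j).2).
  by apply: functional_extensionality => j; exact: hb.
have S2 : forall a : 'I_n -> P, (eval P (sum_env a b) t).2 = (eval P (sum_env a b') t).2.
  move=> a1; rewrite !snd_eval; congr (eval C _ t).
  by apply: functional_extensionality => -[i|j] //=; rewrite hb.
have S1 : forall (a : 'I_n -> P) (b : 'I_m -> P), (eval P (sum_env a b) t).1 =
   D (eval Q (sum_env (fun i => (a i).1) (fun j => (b j).1)) t) (eval Q (fun _ => zero) t)
     (U t (sum_env (fun i => (a i).2) (fun j => (b j).2))).
  move=> a1 b1; rewrite fst_eval; congr (D (eval Q _ t) _ (U t _));
  by apply: functional_extensionality => -[i|j].
have canc : forall x y r u : Q, D x r u = D y r u -> x = y.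
  move=> x y r u Hxy.
  have K : forall z, D (D z r u) u r = z.
    by move=> z; rewrite (I4 hcong hc h1 h2) // h2.
  by rewrite -(K x) Hxy K.
have E1 := congr1 fst E; rewrite !S1 Eb in E1.
have E1' := canc _ _ _ _ E1.
have E2 : eval Q (sum_env (fun i => (a' i).1) (fun j => (b j).1)) t =
          eval Q (sum_env (fun i => (a' i).1) (fun j => (b' j).1)) t.
  by apply: (hc (a:=fun i => (a i).1)) E1'.
apply: injective_projections; last exact: S2.
by rewrite !S1 Eb E2.
Qed.

End Prod.
Lemma converse k (C : algebra tau) : iterated Sigma d k C ->
  forall A : algebra tau, in_variety Sigma A -> isomorphic A C -> nilpotent A k.
Proof.
elim=> [Q hQ habQ | k' C' Q zero T hit IH hQ habQ] A hA [h [g [hh hK hK']]] x y.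
- split; last by move=> ->; have [r _ _ _] := tc_cong (@total_rel A) (@total_rel A); exact: r.
  apply: tc_le_eq; apply: (centr_transfer hh hK (abel_centr habQ)) => //.
- split; last by move=> ->; have [r _ _ _] := tc_cong (@total_rel A) (iter_comm (@total_rel A) k'); exact: r.
  pose p (a : A) : C' := (h a).2.
  have hp : is_hom p by move=> f z; rewrite /p hh.
  have hCV : in_variety Sigma C'.
    apply: (image_variety hp) => // c; exists (g (zero, c)); by rewrite /p hK'.
  have nC := IH C' hCV (ex_intro _ id (ex_intro _ id (And3 (fun f z => erefl) (fun _ => erefl) (fun _ => erefl)))).
  apply: tc_le_eq; apply: (centr_transfer hh hK (prod_centr hQ habQ)) => // u v.
  by move=> /(hom_iter hp) /nC.
Qed.

End Main.

Section Quot.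
Variable tau : signature.
Variable A : algebra tau.
Variable r : A -> A -> Prop.
Hypothesis hr : is_congruence r.

Definition qcar := {P : A -> Prop | exists a, P = r a}.
Definition cls (a : A) : qcar := exist _ (r a) (ex_intro _ a erefl).
Definition rep (x : qcar) : A := proj1_sig (constructive_indefinite_description _ (proj2_sig x)).

Lemma rep_spec x : proj1_sig x = r (rep x).
Proof. by rewrite /rep; case: (constructive_indefinite_description _ _). Qed.

Lemma sig_eqP (T : Type) (Pr : T -> Prop) (x y : {z : T | Pr z}) : proj1_sig x = proj1_sig y -> x = y.
Proof. case: x => x px; case: y => y py /= E; subst y; congr exist; exact: proof_irrelevance. Qed.

Lemma cls_rep x : cls (rep x) = x.
Proof. by apply: sig_eqP; rewrite /= -rep_spec. Qed.

Lemma cls_eq a b : cls a = cls b <-> r a b.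
Proof.
case: hr => hrf hs ht _; split.
- move=> /(congr1 (@proj1_sig _ _)) /= E; have : r a a by [].
  by rewrite {2}E.
- move=> hab; apply: sig_eqP => /=; apply: functional_extensionality => z.
  apply: propositional_extensionality; split=> h; [apply: ht (hs _ _ hab) h | exact: ht hab h].
Qed.

Lemma rep_cls a : r (rep (cls a)) a.
Proof. by apply/cls_eq; rewrite cls_rep. Qed.

Definition qalg : algebra tau := @Algebra tau qcar (fun f x => cls (op A f (fun i => rep (x i)))).

Lemma cls_hom : @is_hom tau A qalg cls.
Proof.
move=> f x /=; apply/cls_eq; case: hr => _ hs _ ho; apply: ho => i; apply: hs; exact: rep_cls.
Qed.

Lemma eval_q V (env : V -> qalg) t : eval qalg env t = cls (eval A (fun v => rep (env v)) t).
Proof.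
rewrite (hom_eval _ _ cls_hom); congr (eval qalg _ t).
by apply: functional_extensionality => v; rewrite cls_rep.
Qed.

Lemma q_variety Sigma : in_variety Sigma A -> in_variety Sigma qalg.
Proof. apply: (image_variety cls_hom) => c; exists (rep c); exact: cls_rep. Qed.

End Quot.

Section QuotNil.
Variable tau : signature.

Lemma iter_desc (A : algebra tau) k x y :
  iter_comm (@total_rel A) k.+1 x y -> iter_comm (@total_rel A) k x y.
Proof.
move=> H; apply: (H _ (iter_cong A k)) => n m t a a' b b' _ hb _.
apply: cong_eval; first exact: iter_cong.
case: (iter_cong A k) => hrf _ _ _.
by move=> -[i|j] /=; [apply: hrf | apply: hb].
Qed.

Lemma quot_iter (A : algebra tau) (r : A -> A -> Prop) (hr : is_congruence r) k :
  (forall a b, r a b -> iter_comm (@total_rel A) k a b) ->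
  forall a b, iter_comm (@total_rel (qalg r)) k (cls r a) (cls r b) -> iter_comm (@total_rel A) k a b.
Proof.
elim: k => [//|k IH] hsub a b H.
have hsub' : forall a b, r a b -> iter_comm (@total_rel A) k a b.
  by move=> u v /hsub /iter_desc.
have [crf crs crt cro] := iter_cong A k.+1.
pose de (x y : qalg r) := iter_comm (@total_rel A) k.+1 (rep x) (rep y).
have hr' := hr; case: hr' => rrf rrs rrt rro.
have Hrep : forall u, iter_comm (@total_rel A) k.+1 (rep (cls r u)) u.
  by move=> u; apply: hsub; apply: rep_cls.
have cde : is_congruence de.
  split; rewrite /de.
  - by move=> x; apply: crf.
  - by move=> x y; apply: crs.
  - by move=> x y z; apply: crt.
  - move=> f x y hxy.
    eapply crt; first exact: (Hrep _).
    eapply crt; last (apply crs; exact: (Hrep _)).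
    by apply cro.
have := H de cde.
rewrite /de => H'.
have : iter_comm (@total_rel A) k.+1 (rep (cls r a)) (rep (cls r b)).
  apply: H' => n m t u u' v v' _ hv.
  rewrite !eval_q //.
  have F : forall (u : 'I_n -> qalg r) (v : 'I_m -> qalg r),
     (fun w => rep (sum_env u v w)) = sum_env (fun i => rep (u i)) (fun j => rep (v j)).
    by move=> u1 v1; apply: functional_extensionality => -[i|j].
  rewrite !F => E.
  eapply crt; first exact: (Hrep _).
  eapply crt; last (apply crs; exact: (Hrep _)).
  apply: (@tc_centr tau A (@total_rel A) (iter_comm (@total_rel A) k) n m t (fun i => rep (u i))
     (fun i => rep (u' i)) (fun j => rep (v j)) (fun j => rep (v' j))) => //.
  + move=> j; apply: IH => //; rewrite !cls_rep; exact: hv.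
  + eapply crt; first (apply crs; exact: (Hrep _)).
    eapply crt; first exact: E.
    exact: (Hrep _).
move=> H2; eapply crt; first (apply crs; exact: (Hrep a)).
eapply crt; first exact: H2.
exact: (Hrep _).
Qed.

Lemma quot_nil (A : algebra tau) n :
  nilpotent (qalg (iter_comm (@total_rel A) n)) n.
Proof.
move=> x y; split; last first.
  by move=> ->; have [h _ _ _] := iter_cong (qalg (iter_comm (@total_rel A) n)) n; exact: h.
rewrite -(cls_rep x) -(cls_rep y) => H.
apply/cls_eq; first exact: iter_cong.
apply: (quot_iter (iter_cong A n)) => //.
Qed.

End QuotNil.

Section Decomp.
Variable tau : signature.
Variable Sigma : term tau nat -> term tau nat -> Prop.
Variable d : term tau 'I_3.
Hypothesis hd : difference_term Sigma d.
Local Notation D := (term3 d).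
Variable A : algebra tau.
Hypothesis hA : in_variety Sigma A.
Variable al : A -> A -> Prop.
Hypothesis hal : is_congruence al.
Hypothesis hC : centralizes (@total_rel A) al eq.
Hypothesis hD2 : forall x y : A, al x y -> D y x x = y.
Variable o : A.
Let hD1 := hD1_gen hd hA.
Let I3' := I3 hal hC hD1 hD2.
Let I4' := I4 hal hC hD1 hD2.
Let I5' := I5 hal hC hD1 hD2.
Let I8' := I8 hal hC hD1 hD2.

Let atr := al_trans hal.
Let asy := al_sym hal.
Let arf := al_refl hal.
Let aD := al_D d hal.
Let aop := al_op hal.

Definition Qcar := {e : A | al o e}.

Lemma qop_prop f (x : 'I_(arity f) -> Qcar) :
  al o (D (op A f (fun i => proj1_sig (x i))) (op A f (fun _ => o)) o).
Proof.
apply: (atr (y := D (op A f (fun _ => o)) (op A f (fun _ => o)) o)).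
  by rewrite hD1; apply: arf.
apply: aD; try apply: arf.
apply: aop => i; exact: (proj2_sig (x i)).
Qed.

Definition Qalg : algebra tau := @Algebra tau Qcar (fun f x => exist _ _ (qop_prop x)).

Lemma Q_eval V (env : V -> Qalg) t :
  proj1_sig (eval Qalg env t) =
  D (eval A (fun v => proj1_sig (env v)) t) (eval A (fun _ => o) t) o.
Proof.
elim: t => [v|f ts IH] /=.
  by rewrite hD2 //; exact: (proj2_sig (env v)).
have -> : (fun i => proj1_sig (eval Qalg env (ts i))) = (fun i =>
  D (eval A (fun v => proj1_sig (env v)) (ts i)) (eval A (fun _ => o) (ts i)) ((fun _ => o) i)).
  by apply: functional_extensionality => i; rewrite IH.
rewrite I3'; last first.
  move=> i; apply: cong_eval => // v; exact: (proj2_sig (env v)).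
rewrite I4' //; apply: aop => i; apply: cong_eval => // v; exact: (proj2_sig (env v)).
Qed.

Lemma Q_variety : in_variety Sigma Qalg.
Proof.
move=> s t hst env; apply: sig_eqP; rewrite !Q_eval.
by rewrite (hA hst (fun v => proj1_sig (env v))) (hA hst (fun _ => o)).
Qed.

Lemma in_cls (x : Qalg) : al o (proj1_sig x).
Proof. exact: (proj2_sig x). Qed.

Lemma Q_abelian : abelian Qalg.
Proof.
move=> x y; split; last first.
  by move=> ->; have [r _ _ _] := tc_cong (@total_rel Qalg) (@total_rel Qalg); exact: r.
apply: tc_le_eq => n m t a a' b b' _ _ E.
have F : forall (a : 'I_n -> Qalg) (b : 'I_m -> Qalg), proj1_sig (eval Qalg (sum_env a b) t) =
   D (eval A (sum_env (fun i => proj1_sig (a i)) (fun j => proj1_sig (b j))) t) (eval A (fun _ => o) t) o.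
  move=> a1 b1; rewrite Q_eval; congr (D (eval A _ t) _ _).
  by apply: functional_extensionality => -[i|j].
have K : forall (a : 'I_n -> Qalg) (b : 'I_m -> Qalg),
   D (proj1_sig (eval Qalg (sum_env a b) t)) o (eval A (fun _ => o) t) =
   eval A (sum_env (fun i => proj1_sig (a i)) (fun j => proj1_sig (b j))) t.
  move=> a1 b1; rewrite F I4'; first by rewrite hD2 //; apply: cong_eval => // -[i|j] /=; exact: in_cls.
  by apply: cong_eval => // -[i|j] /=; exact: in_cls.
apply: sig_eqP; rewrite !F; congr (D _ _ _).
apply: (hC (a := fun i => proj1_sig (a i))) => //.
  by move=> j; apply: (atr (asy (in_cls _))); exact: in_cls.
by rewrite -!K E.
Qed.

Definition Qzero : Qalg := exist _ o (arf o).

Let Cq := qalg al.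

Lemma rep_in (x : Cq) : al (rep x) (rep x).
Proof. exact: arf. Qed.

Lemma T_prop f (c : 'I_(arity f) -> Cq) :
  al o (D (op A f (fun i => rep (c i))) (rep (op Cq f c)) o).
Proof.
apply: (atr (y := D (rep (op Cq f c)) (rep (op Cq f c)) o)); first by rewrite hD1; exact: arf.
apply: aD; try exact: arf.
exact: (rep_cls hal (op A f (fun i => rep (c i)))).
Qed.

Definition Tq f (c : 'I_(arity f) -> Cq) : Qalg := exist _ _ (T_prop c).

Definition Pq := otimes (fun x y => term3 d x Qzero y) Tq.

Lemma h_prop (a : A) : al o (D a (rep (cls al a)) o).
Proof.
apply: (atr (y := D (rep (cls al a)) (rep (cls al a)) o)); first by rewrite hD1; exact: arf.
apply: aD; try exact: arf.
exact: (rep_cls hal).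
Qed.

Definition hq (a : A) : Pq := (exist _ _ (h_prop a), cls al a).
Definition gq (p : Pq) : A := D (proj1_sig p.1) o (rep p.2).

Lemma plusQ (x y : Qalg) : proj1_sig (term3 d x Qzero y) = D (proj1_sig x) o (proj1_sig y).
Proof.
rewrite /term3 Q_eval.
have -> : (fun v => proj1_sig (env3 x Qzero y v)) = env3 (proj1_sig x) o (proj1_sig y).
  by apply: functional_extensionality => -[[|[|k]] hk].
have Eo : eval A (fun _ => o) d = o.
  transitivity (D o o o); last exact: hD1.
  by rewrite /term3; congr (eval A _ d); apply: functional_extensionality => -[[|[|k]] hk].
rewrite Eo -/(term3 d (proj1_sig x) o (proj1_sig y)) hD2 //.
apply: (atr (y := D o o (proj1_sig y))); first by rewrite hD1; exact: in_cls.
apply: aD; try exact: arf; exact: in_cls.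
Qed.

Lemma hq_hom : is_hom hq.
Proof.
move=> f x; rewrite /hq; congr pair; last by rewrite (cls_hom hal).
apply: sig_eqP => /=; rewrite plusQ /=.
rewrite I3'; last by move=> i; exact: (rep_cls hal).
rewrite (I4' (op A f (fun _ => o))); last by apply: aop => i; exact: (rep_cls hal).
rewrite I5'; last by apply: aop => i; exact: (rep_cls hal).
rewrite hD1 I8'; first last.
- apply: asy; exact: (rep_cls hal).
- apply: (atr (y := op A f (fun i => rep (cls al (x i))))).
    by apply: aop => i; apply: asy; exact: (rep_cls hal).
  apply: asy; exact: (rep_cls hal).
by rewrite (cls_hom hal).
Qed.

Lemma hqK : cancel hq gq.
Proof.
move=> a; rewrite /gq /= I4'; last by exact: (rep_cls hal).
by rewrite hD2 //; exact: (rep_cls hal).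
Qed.

Lemma gqK : cancel gq hq.
Proof.
move=> [e c]; rewrite /hq /gq /=.
have E : cls al (D (proj1_sig e) o (rep c)) = c.
  rewrite -[RHS](cls_rep c); apply/(cls_eq hal).
  apply: (atr (y := D o o (rep c))); last by rewrite hD1; exact: arf.
  apply: aD; try exact: arf; apply: asy; exact: in_cls.
congr pair => //; apply: sig_eqP => /=; rewrite E I4'; last exact: in_cls.
by rewrite hD2 //; exact: in_cls.
Qed.

End Decomp.

Section Final.
Variable tau : signature.

Lemma iso_trans (A B C : algebra tau) : isomorphic A B -> isomorphic B C -> isomorphic A C.
Proof.
move=> [h [g [hh hK hK']]] [h' [g' [hh' hK2 hK2']]].
exists (fun a => h' (h a)), (fun c => g (g' c)); split.
- move=> f x; by rewrite hh hh'.
- by move=> a; rewrite hK2 hK.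
- by move=> c; rewrite hK' hK2'.
Qed.

Lemma iso_refl (A : algebra tau) : isomorphic A A.
Proof. by exists id, id; split. Qed.

Lemma iso_otimes (Q C C' : algebra tau) (plus : Q -> Q -> Q)
    (T : forall f : sym tau, ('I_(arity f) -> C) -> Q) (h : C -> C') (g : C' -> C) :
  is_hom h -> cancel h g -> cancel g h ->
  isomorphic (otimes plus T) (otimes plus (fun f c => T f (fun i => g (c i)))).
Proof.
move=> hh hK hK'.
exists (fun p : otimes plus T => (p.1, h p.2) : otimes plus (fun f c => T f (fun i => g (c i)))).
exists (fun p => (p.1, g p.2)); split.
- move=> f x /=; congr pair; last by rewrite hh.
  congr (plus _ _); congr (T f); apply: functional_extensionality => i; by rewrite hK.
- by move=> [a b] /=; rewrite hK.
- by move=> [a b] /=; rewrite hK'.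
Qed.

Definition unit_alg : algebra tau := @Algebra tau unit (fun _ _ => tt).

Lemma unit_variety Sigma : in_variety Sigma unit_alg.
Proof. by move=> s t _ env; case: (eval _ _ s); case: (eval _ _ t). Qed.

Lemma unit_abelian : abelian unit_alg.
Proof.
move=> [] []; split=> // _.
by have [r _ _ _] := tc_cong (@total_rel unit_alg) (@total_rel unit_alg); exact: r.
Qed.

End Final.

Section Forward.
Variable tau : signature.
Variable Sigma : term tau nat -> term tau nat -> Prop.
Variable d : term tau 'I_3.
Hypothesis hd : difference_term Sigma d.

Lemma forward n : forall A : algebra tau, in_variety Sigma A -> nilpotent A n.+1 ->
  exists C : algebra tau, iterated Sigma d n.+1 C /\ isomorphic A C.
Proof.
elim: n => [|n IH] A hA hnil.
  by exists A; split; [apply: iterated_one | exact: iso_refl].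
pose al := iter_comm (@total_rel A) n.+1.
have hal : is_congruence al := iter_cong A n.+1.
have hcen : centralizes (@total_rel A) al eq.
  apply: (centr_eq (de := tc_comm (@total_rel A) al)); first exact: hnil.
  exact: tc_centr.
have hD2 : forall x y : A, al x y -> term3 d y x x = y.
  move=> x y hxy; have [_ H] := hd hA hal (al_sym hal hxy).
  apply: tc_le_eq H; exact: (centr_mono (fun x y h => I) (fun x y h => h) hcen).
have hC0 := q_variety hal hA.
have [C' [hit [h' [g' [hh' hK' hK'']]]]] := IH _ hC0 (@quot_nil _ A n.+1).
case: (classic (inhabited A)) => [[o]|hne].
- exists (otimes (fun x y => term3 d x (Qzero hd hA hal o) y)
     (fun f c => Tq hd hA hal o (fun i => g' (c i)))).
  split.
    apply: iterated_succ => //; [exact: (Q_variety hcen hD2) | exact: (Q_abelian hcen hD2)].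
  apply: iso_trans (iso_otimes _ _ hh' hK' hK'').
  exists (hq hd hA hal o), (@gq _ _ _ hd _ hA _ hal o); split; [exact: hq_hom | exact: hqK | exact: gqK].
- exists (otimes (fun x y => term3 d x (tt : unit_alg tau) y) (fun f (c : 'I_(arity f) -> C') => (tt : unit_alg tau))).
  split.
    apply: iterated_succ => //; [exact: unit_variety | exact: unit_abelian].
  have F : forall a : A, False by move=> a; apply: hne; exact: (inhabits a).
  exists (fun a => False_rect _ (F a)), (fun p => rep (g' p.2)); split.
  + by move=> f x; case: (F (op A f (fun i => False_rect _ (F (x i))))).
  + by move=> a; case: (F a).
  + by move=> p; case: (F (rep (g' p.2))).
Qed.

End Forward.

Theorem proposition2p8 (tau : signature)
    (Sigma : term tau nat -> term tau nat -> Prop) (d : term tau 'I_3)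
    (hd : difference_term Sigma d)
    (A : algebra tau) (hA : in_variety Sigma A) (n : nat) (hn : 1 <= n) :
  nilpotent A n <-> exists C : algebra tau, iterated Sigma d n C /\ isomorphic A C.
Proof.
split.
- case: n hn => [//|n] _; exact: forward.
- by move=> [C [hit hiso]]; exact: (converse hd hit hA hiso).
Qed.
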